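(* Consider the integer quadratic program: minimize $x^TQx$ subject to $Ax\le b$, $Cx=d$, $x\in\mathbb{Z}^n$. Suppose this program has an optimal solution, all of its optimal solutions are deep, and for every $y_i\in Y$ the row vector $y_i^TQ$ is linearly dependent on the rows of $C$. Then for every optimal solution $x^\star$ and every integer vector $\lambda\in\mathbb{Z}^r$, the vector $x^\star+Y\lambda$ is also an optimal solution.
   Context: Setting: $Q$ is an $n\times n$ integer symmetric matrix, $A$ an $m\times n$ integer matrix, $b\in\mathbb{Z}^m$, $C$ an integer matrix with $n$ columns and linearly independent rows, and $d$ an integer vector. $\Delta$ is the maximum absolute value of the determinant of a square submatrix of $C$. $y_1,\dots,y_r$ is a basis of the nullspace of $C$ consisting of integer vectors with $|y_i|_\infty\le\Delta^2$; $Y$ denotes both the set of these vectors and the $n\times r$ matrix with columns $y_1,\dots,y_r$. A feasible solution is an $x\in\mathbb{Z}^n$ with $Ax\le b$ and $Cx=d$; an optimal solution is a feasible solution minimizing $x^TQx$. A feasible solution $x$ is deep if $x+y_i$ and $x-y_i$ are feasible for all $y_i\in Y$. *)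

(* Defs.v *)
From HB Require Import structures.
From mathcomp Require Import all_boot all_order all_algebra.
Set Implicit Arguments. Unset Strict Implicit. Unset Printing Implicit Defensive.
Import Order.TTheory GRing.Theory Num.Theory.
Local Open Scope ring_scope.

Definition toQ (p q : nat) (M : 'M[int]_(p, q)) : 'M[rat]_(p, q) :=
  map_mx (fun z : int => z%:~R) M.

(* Delta = maximum absolute value of the determinant of a (nonempty) square
   submatrix of C. Non-injective row/column selections give determinant 0,
   hence do not affect the maximum. *)
Definition Delta (k n : nat) (C : 'M[int]_(k, n)) : nat :=
  \max_(p < minn k n)
    \max_(f : {ffun 'I_p.+1 -> 'I_k})
      \max_(g : {ffun 'I_p.+1 -> 'I_n})
        `|\det (\matrix_(i, j) C (f i) (g j))|%N.

Definition qobj (n : nat) (Q : 'M[int]_n) (x : 'cV[int]_n) : int :=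
  (x^T *m Q *m x) 0 0.

Definition feasible (m n k : nat) (A : 'M[int]_(m, n)) (b : 'cV[int]_m)
    (C : 'M[int]_(k, n)) (d : 'cV[int]_k) (x : 'cV[int]_n) : Prop :=
  (forall i, (A *m x) i 0 <= b i 0) /\ C *m x = d.

Definition optimal (m n k : nat) (Q : 'M[int]_n) (A : 'M[int]_(m, n))
    (b : 'cV[int]_m) (C : 'M[int]_(k, n)) (d : 'cV[int]_k) (x : 'cV[int]_n) : Prop :=
  feasible A b C d x /\
  forall z, feasible A b C d z -> qobj Q x <= qobj Q z.

Definition deep (m n k r : nat) (A : 'M[int]_(m, n)) (b : 'cV[int]_m)
    (C : 'M[int]_(k, n)) (d : 'cV[int]_k) (Y : 'M[int]_(n, r)) (x : 'cV[int]_n) : Prop :=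
  feasible A b C d x /\
  forall i : 'I_r, feasible A b C d (x + col i Y) /\ feasible A b C d (x - col i Y).

(* Main.v *)
Require Import Defs.
From HB Require Import structures.
From mathcomp Require Import all_boot all_order all_algebra.
From mathcomp Require Import ring zify.
Import Order.TTheory GRing.Theory Num.Theory.
Local Open Scope ring_scope.

Lemma mul_sum_col n r (Y : 'M[int]_(n, r)) (lam : 'cV[int]_r) :
  Y *m lam = \sum_j lam j 0 *: col j Y.
Proof.
apply/matrixP=> i k; rewrite !mxE summxE; apply: eq_bigr=> j _.
by rewrite !mxE (ord1 k) mulrC.
Qed.

Lemma qobj_par n (Q : 'M[int]_n) x y :
  qobj Q (x + y) + qobj Q (x - y) = 2 * qobj Q x + 2 * qobj Q y.
Proof.
rewrite /qobj !linearD !linearN /= ?mulmxDl ?mulmxDr ?mulmxN ?mulNmx !mxE.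
ring.
Qed.

Lemma step (m n k : nat) (Q : 'M[int]_n) (A : 'M[int]_(m, n))
    (b : 'cV[int]_m) (C : 'M[int]_(k, n)) (d : 'cV[int]_k) x y :
  qobj Q y = 0 -> optimal Q A b C d x ->
  feasible A b C d (x + y) -> feasible A b C d (x - y) ->
  optimal Q A b C d (x + y) /\ optimal Q A b C d (x - y).
Proof.
move=> Hy [Fx Ox] Fp Fm.
have Hp := Ox _ Fp; have Hm := Ox _ Fm.
have E := @qobj_par _ Q x y; rewrite Hy mulr0 addr0 in E.
have E1 : qobj Q (x + y) = qobj Q x by lia.
have E2 : qobj Q (x - y) = qobj Q x by lia.
split; split=> // z Fz; [rewrite E1|rewrite E2]; exact: Ox.
Qed.

Theorem corollary1 (n m k r : nat)
  (Q : 'M[int]_n) (A : 'M[int]_(m, n)) (b : 'cV[int]_m)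
  (C : 'M[int]_(k, n)) (d : 'cV[int]_k) (Y : 'M[int]_(n, r))
  (* Q symmetric *)
  (HQ : Q^T = Q)
  (* rows of C linearly independent *)
  (HC : row_free (toQ C))
  (* columns of Y form a basis of the nullspace of C *)
  (HYfree : row_free (toQ Y)^T)
  (HYspan : forall v : 'cV[rat]_n,
      toQ C *m v = 0 <-> exists l : 'cV[rat]_r, v = toQ Y *m l)
  (HYbound : forall (i : 'I_n) (j : 'I_r), (`|Y i j| <= ((Delta C) ^ 2)%N%:Z))
  (* the program has an optimal solution *)
  (Hex : exists x, optimal Q A b C d x)
  (* all optimal solutions are deep *)
  (Hdeep : forall x, optimal Q A b C d x -> deep A b C d Y x)
  (* each y_i^T Q lies in the row space of C *)
  (HYQ : forall i : 'I_r, ((toQ (col i Y))^T *m toQ Q <= toQ C)%MS) :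
  forall (xs : 'cV[int]_n) (lam : 'cV[int]_r),
    optimal Q A b C d xs -> optimal Q A b C d (xs + Y *m lam).
Proof.
have Hq0 : forall i, qobj Q (col i Y) = 0.
  move=> i.
  have Cy : toQ C *m toQ (col i Y) = 0.
    apply/HYspan; exists (delta_mx i 0).
    by rewrite /toQ map_col colE.
  have [D HD] := submxP (HYQ i).
  have : ((toQ (col i Y))^T *m toQ Q *m toQ (col i Y)) 0 0 = 0.
    by rewrite HD -mulmxA Cy mulmx0 mxE.
  have Ht : (toQ (col i Y))^T = toQ (col i Y)^T by rewrite /toQ map_trmx.
  rewrite Ht /toQ -!map_mxM mxE => /eqP.
  by rewrite intr_eq0 => /eqP.
have H1 : forall x i, optimal Q A b C d x ->
    optimal Q A b C d (x + col i Y) /\ optimal Q A b C d (x - col i Y).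
  move=> x i Ox; have [_ /(_ i) [Fp Fm]] := Hdeep x Ox.
  exact: step.
have H2 : forall x i (z : nat), optimal Q A b C d x ->
    optimal Q A b C d (x + z%:Z *: col i Y) /\
    optimal Q A b C d (x - z%:Z *: col i Y).
  move=> x i; elim=> [|z IH] Ox.
    by rewrite scale0r addr0 subr0.
  have [Op Om] := IH Ox.
  have -> : x + (z.+1)%:Z *: col i Y = (x + z%:Z *: col i Y) + col i Y.
    by rewrite -[z.+1]addn1 PoszD scalerDl scale1r addrA.
  have -> : x - (z.+1)%:Z *: col i Y = (x - z%:Z *: col i Y) - col i Y.
    by rewrite -[z.+1]addn1 PoszD scalerDl scale1r opprD addrA.
  by split; [apply: (proj1 (H1 _ _ Op)) | apply: (proj2 (H1 _ _ Om))].
have H3 : forall x i (z : int), optimal Q A b C d x ->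
    optimal Q A b C d (x + z *: col i Y).
  move=> x i [z|z] Ox; first exact: (proj1 (H2 x i z Ox)).
  rewrite NegzE scaleNr.
  exact: (proj2 (H2 x i z.+1 Ox)).
move=> xs lam Oxs; rewrite mul_sum_col.
elim/big_rec: _ => [|j s _ Hs]; first by rewrite addr0.
by rewrite addrCA addrC; apply: H3.
Qed.
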